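(* Let $P$ be a propositional normal logic program with countably many rules, and let $Z$ be its set of propositional atoms. Then, for every countable ordinal $\alpha<\Omega$, the immediate consequence operator $T_P:V^Z\to V^Z$ is $\alpha$-continuous with respect to the relations $\sqsubseteq_\alpha$ on $V^Z$.
   Context: Truth values. Let $\Omega$ be the first uncountable ordinal. $V$ consists of values $F_\alpha,T_\alpha$ ($\alpha<\Omega$) and $0$, totally ordered by $$F_0<F_1<\dots<F_\alpha<\dots<0<\dots<T_\alpha<\dots<T_1<T_0.$$ This is a complete lattice with supremum $\bigvee$. Order of a value: $order(F_\alpha)=order(T_\alpha)=\alpha$ and $order(0)=+\infty$. Relations on $V$, for $\alpha<\Omega$: $x\sqsubseteq_\alpha y$ iff either $x=y$, or both $order(x)\ge\alpha$ and $order(y)\ge\alpha$ and at least one of the following holds: both orders are $>\alpha$; $x=F_\alpha$; $y=T_\alpha$. Write $=_\alpha$ for the induced equivalence. The operation $\bigsqcup_\alpha$ on $V$, for $X\subseteq(x]_\alpha$ where $(x]_\alpha=\{y:\forall\beta<\alpha,\ x=_\beta y\}$: - if $order(x)<\alpha$, then $\bigsqcup_\alpha X=x$; - otherwise $\bigsqcup_\alpha X$ is $T_\alpha$ if $T_\alpha\in X$, is $F_\alpha$ if $X\subseteq\{F_\alpha\}$, and is $F_{\alpha+1}$ otherwise. Interpretations. $V^Z$ is the set of interpretations. On $V^Z$: $I\le J$ iff $I(z)\le J(z)$ for all $z$; $I\sqsubseteq_\alpha J$ iff $I(z)\sqsubseteq_\alpha J(z)$ for all $z\in Z$; $\bigsqcup_\alpha$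 and $\bigvee$ are computed pointwise. Programs. A rule has the form $p\leftarrow l_1,\dots,l_n$, where $p\in Z$ and each $l_i$ is either an atom $q$ or a negated atom $\sim q$ with $q\in Z$; alternatively the body is the constant true or false. An interpretation $I$ extends to bodies as follows: - $I(\sim q)=\sim(I(q))$, where $\sim F_\beta=T_{\beta+1}$, $\sim T_\beta=F_{\beta+1}$ and $\sim0=0$; - $I(l_1,\dots,l_n)=\min\{I(l_1),\dots,I(l_n)\}$; - $I(\mathrm{true})=T_0$ and $I(\mathrm{false})=F_0$. $T_P(I)(p)=\bigvee\{I(l_1,\dots,l_n):(p\leftarrow l_1,\dots,l_n)\in P\}$. $\alpha$-continuity. A function $f:V^Z\to V^Z$ is $\alpha$-monotonic if $I\sqsubseteq_\alpha J$ implies $f(I)\sqsubseteq_\alpha f(J)$. It is $\alpha$-continuous if it is $\alpha$-monotonic and, for every sequence $(I_n)_{n\ge0}$ with $I_n\sqsubseteq_\alpha I_{n+1}$, we have $f(\bigsqcup_\alpha\{I_n:n\ge0\})=_\alpha\bigsqcup_\alpha\{f(I_n):n\ge0\}$. *)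

(* Defs.v *)
From Stdlib Require Import List Classical ClassicalEpsilon.
Import ListNotations.
Set Implicit Arguments.

(* The first uncountable ordinal Omega, presented abstractly: a type O *)
(* with a (boolean) strict order lt which is a well-order, O itself is *)
(* uncountable, and every proper initial segment {b | b < a} is        *)
(* countable.  This characterises omega_1 up to order isomorphism.     *)
Definition countable_type (A : Type) : Prop :=
  exists f : A -> nat, forall x y, f x = f y -> x = y.

Definition is_Omega (O : Type) (lt : O -> O -> bool) (o0 : O) (succ : O -> O)
  : Prop :=
  (forall a, lt a a = false) /\
  (forall a b c, lt a b = true -> lt b c = true -> lt a c = true) /\
  (forall a b, a = b \/ lt a b = true \/ lt b a = true) /\
  well_founded (fun a b => lt a b = true) /\
  ~ countable_type O /\
  (forall a, countable_type {b : O | lt b a = true}) /\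
  (forall a, lt a o0 = false) /\
  (forall a, lt a (succ a) = true /\ forall b, lt a b = true -> lt b (succ a) = false).

Section Values.
Variables (O : Type) (lt : O -> O -> bool) (o0 : O) (succ : O -> O).

Inductive V : Type := VF (a : O) | VT (a : O) | V0.

(* total order F_0 < F_1 < ... < 0 < ... < T_1 < T_0 *)
Definition leV (x y : V) : Prop :=
  match x, y with
  | VF a, VF b => lt b a = false
  | VF _, _ => True
  | V0, VF _ => False
  | V0, _ => True
  | VT a, VT b => lt a b = false
  | VT _, _ => False
  end.

Definition leVb (x y : V) : bool :=
  match x, y with
  | VF a, VF b => negb (lt b a)
  | VF _, _ => true
  | V0, VF _ => false
  | V0, _ => true
  | VT a, VT b => negb (lt a b)
  | VT _, _ => false
  end.

Definition minV (x y : V) : V := if leVb x y then x else y.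

Definition is_sup (S : V -> Prop) (v : V) : Prop :=
  (forall w, S w -> leV w v) /\ (forall u, (forall w, S w -> leV w u) -> leV v u).

Definition supV (S : V -> Prop) : V := epsilon (inhabits V0) (is_sup S).

(* order(x) >= a, order(x) > a, order(x) < a ; order(0) = +infinity *)
Definition ord_ge (x : V) (a : O) : Prop :=
  match x with VF b | VT b => lt b a = false | V0 => True end.
Definition ord_gt (x : V) (a : O) : Prop :=
  match x with VF b | VT b => lt a b = true | V0 => True end.
Definition ord_lt (x : V) (a : O) : Prop :=
  match x with VF b | VT b => lt b a = true | V0 => False end.

Definition sqle (a : O) (x y : V) : Prop :=
  x = y \/
  (ord_ge x a /\ ord_ge y a /\
   ((ord_gt x a /\ ord_gt y a) \/ x = VF a \/ y = VT a)).

Definition sqeq (a : O) (x y : V) : Prop := sqle a x y /\ sqle a y x.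

Definition seg (a : O) (x : V) : V -> Prop :=
  fun y => forall b, lt b a = true -> sqeq b x y.

(* the operation |_|_a applied to X (a subset of (x]_a) *)
Definition lubA (a : O) (x : V) (X : V -> Prop) : V :=
  if excluded_middle_informative (ord_lt x a) then x
  else if excluded_middle_informative (X (VT a)) then VT a
  else if excluded_middle_informative (forall y, X y -> y = VF a) then VF a
  else VF (succ a).

Variable Z : Type.
Definition interp := Z -> V.

Definition sqleI (a : O) (I J : interp) : Prop := forall z, sqle a (I z) (J z).
Definition sqeqI (a : O) (I J : interp) : Prop := forall z, sqeq a (I z) (J z).

(* pointwise |_|_a of the set {I_n : n >= 0}; each I_n lies in (I_0]_a *)
Definition lubA_seq (a : O) (I : nat -> interp) : interp :=
  fun z => lubA a (I 0 z) (fun v => exists n, I n z = v).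

Inductive literal : Type := Pos (q : Z) | Neg (q : Z).
Inductive body : Type := BLits (ls : list literal) | BTrue | BFalse.
Record rule : Type := Rule { head : Z; rbody : body }.

Definition negV (x : V) : V :=
  match x with VF b => VT (succ b) | VT b => VF (succ b) | V0 => V0 end.

Definition eval_lit (I : interp) (l : literal) : V :=
  match l with Pos q => I q | Neg q => negV (I q) end.

(* min of the literal values (an empty conjunction is T_0, i.e. true) *)
Definition eval_body (I : interp) (bd : body) : V :=
  match bd with
  | BLits ls => fold_right (fun l acc => minV (eval_lit I l) acc) (VT o0) ls
  | BTrue => VT o0
  | BFalse => VF o0
  end.

Definition program := rule -> Prop.

Definition TP (P : program) (I : interp) : interp :=
  fun p => supV (fun v => exists r, P r /\ head r = p /\ eval_body I (rbody r) = v).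

Definition alpha_monotonic (a : O) (f : interp -> interp) : Prop :=
  forall I J, sqleI a I J -> sqleI a (f I) (f J).

Definition alpha_continuous (a : O) (f : interp -> interp) : Prop :=
  alpha_monotonic a f /\
  forall I : nat -> interp, (forall n, sqleI a (I n) (I (S n))) ->
    sqeqI a (f (lubA_seq a I)) (lubA_seq a (fun n => f (I n))).

End Values.

(* Main.v *)
Require Import Defs.
From Stdlib Require Import List Classical ClassicalEpsilon Lia.
Import ListNotations.

Section S.
Variables (O : Type) (lt : O -> O -> bool) (o0 : O) (succ : O -> O).
Hypothesis Hom : is_Omega lt o0 succ.

Lemma irr x : lt x x = false. Proof. apply Hom. Qed.
Lemma trans x y z : lt x y = true -> lt y z = true -> lt x z = true.
Proof. apply Hom. Qed.
Lemma tri x y : x = y \/ lt x y = true \/ lt y x = true. Proof. apply Hom. Qed.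
Lemma asym x y : lt x y = true -> lt y x = false.
Proof. intros H. destruct (lt y x) eqn:E; auto. pose proof (trans _ _ _ H E). rewrite irr in H0; discriminate. Qed.
Lemma nlt x y : lt x y = false -> x = y \/ lt y x = true.
Proof. intros H. destruct (tri x y) as [?|[?|?]]; auto. congruence. Qed.
Lemma succ_gt x : lt x (succ x) = true. Proof. apply Hom. Qed.
Lemma succ_le x b : lt x b = true -> lt b (succ x) = false. Proof. apply Hom. Qed.

Ltac ordo :=
  repeat match goal with
  | H : true = false |- _ => discriminate H
  | H : false = true |- _ => discriminate H
  | H : ?x = ?x |- _ => clear H
  | H : lt ?x ?x = true |- _ => rewrite irr in H; discriminate H
  | H : lt ?x ?y = true, H2 : lt ?y ?x = true |- _ => rewrite (asym _ _ H) in H2; discriminate H2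
  | H : lt ?x ?y = true, H2 : lt ?y ?z = true |- _ =>
      match goal with
      | _ : lt x z = true |- _ => fail 1
      | _ : lt x z = false |- _ => rewrite (trans _ _ _ H H2) in *; discriminate
      | _ => pose proof (trans _ _ _ H H2)
      end
  | H : lt ?x ?y = false |- _ => destruct (nlt _ _ H); clear H; [subst|]
  end.

Ltac osolve :=
  try (match goal with |- lt ?x ?y = false => let E := fresh in destruct (lt x y) eqn:E; [|reflexivity] end);
  ordo.

Definition leV' := leV lt.
Lemma leV_refl x : leV lt x x.
Proof. destruct x; simpl; auto; apply irr. Qed.
Lemma leV_trans x y z : leV lt x y -> leV lt y z -> leV lt x z.
Proof.
  destruct x, y, z; simpl; auto; try tauto; intros H1 H2;
  osolve.
Qed.
Lemma leV_total x y : leV lt x y \/ leV lt y x.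
Proof.
  destruct x as [b|b|], y as [c|c|]; simpl; auto;
  destruct (tri b c) as [->|[H|H]]; rewrite ?irr; auto; rewrite (asym _ _ H); auto.
Qed.
Lemma leV_antisym x y : leV lt x y -> leV lt y x -> x = y.
Proof.
  destruct x as [b|b|], y as [c|c|]; simpl; try tauto; intros H1 H2;
  destruct (nlt _ _ H1) as [->|H]; auto; rewrite H in H2; discriminate.
Qed.
Lemma leVb_true x y : leVb lt x y = true -> leV lt x y.
Proof. destruct x, y; simpl; auto; try discriminate; destruct (lt _ _); simpl; auto; discriminate. Qed.
Lemma leVb_false x y : leVb lt x y = false -> leV lt y x.
Proof. intros H. destruct (leV_total x y) as [H'|H']; auto.
  destruct x, y; simpl in *; auto; try discriminate; rewrite H' in H; discriminate. Qed.
Lemma nleV x y : ~ leV lt x y -> leV lt y x.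
Proof. intros H; destruct (leV_total x y); tauto. Qed.
Lemma wf_min (Pr : O -> Prop) : (exists x, Pr x) -> exists m, Pr m /\ forall y, Pr y -> lt y m = false.
Proof.
  intros [x Hx]. apply NNPP; intro Hn.
  assert (forall z, ~ Pr z).
  { intro z. induction z as [z IH] using (well_founded_ind (proj1 (proj2 (proj2 (proj2 Hom))))).
    intro Hz. apply Hn. exists z; split; auto. intros y Hy. destruct (lt y z) eqn:E; auto.
    exfalso; exact (IH y E Hy). }
  exact (H x Hx).
Qed.

Lemma sup_exists (S : V O -> Prop) : exists v, is_sup lt S v.
Proof.
  destruct (classic (exists d, S (VT d))) as [HT|HT].
  - destruct (wf_min (fun d => S (VT d)) HT) as [m [Hm Hmin]].
    exists (VT m); split.
    + intros [b|b|] Hw; simpl; auto.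
    + intros u Hu; apply Hu; auto.
  - destruct (classic (S (V0 O))) as [H0|H0].
    + exists (V0 O); split.
      * intros [b|b|] Hw; simpl; auto. apply HT; eauto.
      * intros u Hu; apply Hu; auto.
    + destruct (classic (exists g, forall b, S (VF b) -> lt g b = false)) as [HB|HB].
      * destruct (wf_min _ HB) as [m [Hm Hmin]].
        exists (VF m); split.
        -- intros [b|b|] Hw; simpl; auto; try (exfalso; apply HT; eauto); try tauto.
        -- intros [g|g|] Hu; simpl; auto. apply Hmin. intros b Hb. apply (Hu _ Hb).
      * exists (V0 O); split.
        -- intros [b|b|] Hw; simpl; auto. apply HT; eauto.
        -- intros [g|g|] Hu; simpl; auto. apply HB. exists g. intros b Hb. apply (Hu _ Hb).
Qed.

Lemma supV_spec S : is_sup lt S (supV lt S).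
Proof. unfold supV. apply epsilon_spec. apply sup_exists. Qed.

Lemma sup_ub S w : S w -> leV lt w (supV lt S).
Proof. intros; apply (proj1 (supV_spec S)); auto. Qed.
Lemma sup_least S u : (forall w, S w -> leV lt w u) -> leV lt (supV lt S) u.
Proof. intros; apply (proj2 (supV_spec S)); auto. Qed.
Lemma sup_gt S v : ~ leV lt (supV lt S) v -> exists w, S w /\ ~ leV lt w v.
Proof. intros H. apply NNPP; intro Hn. apply H, sup_least. intros w Hw.
  apply NNPP; intro. apply Hn; eauto. Qed.
Lemma sup_T S b : supV lt S = VT b -> S (VT b).
Proof.
  intros E. apply NNPP; intro Hn.
  destruct (classic (exists d, S (VT d))) as [HT|HT].
  - destruct (wf_min _ HT) as [m [Hm Hmin]].
    assert (leV lt (supV lt S) (VT m)).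
    { apply sup_least. intros [c|c|] Hc; simpl; auto. }
    assert (leV lt (VT m) (supV lt S)) by (apply sup_ub; auto).
    pose proof (leV_antisym _ _ H H0). rewrite E in H1. injection H1; intros; subst; auto.
  - assert (leV lt (supV lt S) (V0 O)).
    { apply sup_least. intros [c|c|] Hc; simpl; auto. apply HT; eauto. }
    rewrite E in H; simpl in H; auto.
Qed.
Lemma sup_ext S S' : (forall v, S v <-> S' v) -> supV lt S = supV lt S'.
Proof.
  intros H. apply leV_antisym; apply sup_least; intros w Hw; apply sup_ub; apply H; auto.
Qed.
Variable a : O.
Inductive Kind := KLo (b : O) | KF | KM | KT | KHi (b : O).
Definition key (x : V O) : Kind :=
  match x with
  | VF b => if lt b a then KLo b else if lt a b then KM else KF
  | VT b => if lt b a then KHi b else if lt a b then KM else KT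
  | V0 _ => KM
  end.
Definition sqleK (k l : Kind) : Prop :=
  match k, l with
  | KLo b, KLo c => b = c
  | KHi b, KHi c => b = c
  | KF, (KF | KM | KT) => True
  | KM, (KM | KT) => True
  | KT, KT => True
  | _, _ => False
  end.
Lemma sqleK_refl k : sqleK k k.
Proof. destruct k; simpl; auto. Qed.
Lemma sqleK_trans k l m : sqleK k l -> sqleK l m -> sqleK k m.
Proof. destruct k, l, m; simpl; intros; subst; auto; tauto. Qed.
Lemma sqleK_antisym k l : sqleK k l -> sqleK l k -> k = l.
Proof. destruct k, l; simpl; intros; subst; auto; tauto. Qed.

Ltac dlt := repeat match goal with
  | |- context [lt ?x ?y] => let E := fresh "E" in destruct (lt x y) eqn:E
  | H : context [lt ?x ?y] |- _ =>
      lazymatch type of H with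
      | lt _ _ = _ => fail
      | _ => let E := fresh "E" in destruct (lt x y) eqn:E
      end
  end.

Ltac fin := rewrite ?irr; repeat match goal with |- _ /\ _ => split end;
  try solve [auto | apply asym; auto | left; split; auto | right; left; reflexivity
            | right; right; reflexivity | osolve ].

Lemma key_sqle x y : sqle lt a x y <-> sqleK (key x) (key y).
Proof.
  split.
  - intros [->|H]; [apply sqleK_refl|].
    destruct x as [b|b|], y as [c|c|]; unfold ord_ge, ord_gt in H; simpl;
    destruct H as [H1 [H2 H3]];
    destruct H3 as [[H3 H4]|[H3|H3]]; try discriminate;
    try (injection H3; intros; subst); dlt; simpl; auto; ordo.
  - destruct x as [b|b|], y as [c|c|]; simpl; dlt; simpl; intros H; try tauto; subst;
    try (left; reflexivity);
    right; unfold ord_ge, ord_gt; ordo; fin.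
Qed.
Lemma sqle_trans x y z : sqle lt a x y -> sqle lt a y z -> sqle lt a x z.
Proof. rewrite !key_sqle. apply sqleK_trans. Qed.
Lemma sqle_refl x : sqle lt a x x.
Proof. left; auto. Qed.
Lemma sqeq_key x y : sqeq lt a x y <-> key x = key y.
Proof. unfold sqeq; rewrite !key_sqle; split.
  - intros [H1 H2]; apply sqleK_antisym; auto.
  - intros ->; split; apply sqleK_refl. Qed.
Lemma key_Lo x b : key x = KLo b -> x = VF b /\ lt b a = true.
Proof. destruct x; simpl; dlt; intros H; try discriminate; injection H; intros; subst; intuition congruence. Qed.
Lemma key_Hi x b : key x = KHi b -> x = VT b /\ lt b a = true.
Proof. destruct x; simpl; dlt; intros H; try discriminate; injection H; intros; subst; intuition congruence. Qed.
Lemma key_F x : key x = KF <-> x = VF a.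
Proof. split.
  - destruct x as [b|b|]; simpl; dlt; intros H; try discriminate; ordo; auto.
  - intros ->; simpl; rewrite irr; auto. Qed.
Lemma key_T x : key x = KT <-> x = VT a.
Proof. split.
  - destruct x as [b|b|]; simpl; dlt; intros H; try discriminate; ordo; auto.
  - intros ->; simpl; rewrite irr; auto. Qed.
Definition band (k : Kind) := k = KF \/ k = KM \/ k = KT.
Lemma key_band x : band (key x) <-> leV lt (VF a) x /\ leV lt x (VT a).
Proof. unfold band; destruct x as [b|b|]; simpl; dlt; split; intros H;
  try (destruct H as [?|[?|?]]; discriminate); try (destruct H; discriminate);
  try (destruct H; congruence); fin; ordo; auto. Qed.
Lemma sqleK_band k l : sqleK k l -> (band k <-> band l).
Proof. unfold band; destruct k, l; simpl; intuition (try discriminate). Qed.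
Lemma sqle_fix x y : sqle lt a x y -> ~ band (key x) -> y = x.
Proof. rewrite key_sqle. unfold band. intros H Hb.
  destruct (key x) eqn:Ex, (key y) eqn:Ey; simpl in H; try tauto; subst;
  try (destruct (key_Lo _ _ Ex), (key_Lo _ _ Ey); congruence);
  try (destruct (key_Hi _ _ Ex), (key_Hi _ _ Ey); congruence). Qed.
Lemma sqle_fix' x y : sqle lt a x y -> ~ band (key y) -> x = y.
Proof. intros H Hb. pose proof (proj1 (key_sqle x y) H) as H'.
  destruct (classic (band (key x))) as [Hx|Hx].
  - exfalso; apply Hb, (sqleK_band _ _ H'); auto.
  - symmetry; apply sqle_fix; auto. Qed.
Lemma key_neg_band x : band (key x) -> key (negV succ x) = KM.
Proof.
  unfold band. destruct x as [b|b|]; simpl; auto; dlt; intros H;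
  try (destruct H as [?|[?|?]]; discriminate); auto;
  pose proof (succ_gt b); pose proof (succ_le b); ordo; try congruence;
  match goal with H : ?x = succ ?x, H0 : lt ?x (succ ?x) = true |- _ =>
    rewrite <- H in H0; rewrite irr in H0; discriminate end.
Qed.
Lemma neg_mono x y : sqle lt a x y -> sqle lt a (negV succ x) (negV succ y).
Proof.
  intros H. destruct (classic (band (key x))) as [Hb|Hb].
  - pose proof (proj1 (sqleK_band _ _ (proj1 (key_sqle x y) H)) Hb).
    apply key_sqle. rewrite !key_neg_band by auto. simpl; auto.
  - rewrite (sqle_fix _ _ H Hb). apply sqle_refl.
Qed.
Ltac rw := repeat match goal with H : lt ?x ?y = ?v |- context [lt ?x ?y] => rewrite H end;
  rewrite ?irr; simpl.
Definition leKb (k l : Kind) : bool :=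
  match k, l with
  | KLo b, KLo c => negb (lt c b)
  | KLo _, _ => true
  | _, KLo _ => false
  | KHi b, KHi c => negb (lt b c)
  | KHi _, _ => false
  | _, KHi _ => true
  | KF, _ => true
  | KM, KF => false
  | KM, _ => true
  | KT, KT => true
  | KT, _ => false
  end.
Definition minK k l := if leKb k l then k else l.
Lemma key_min x y : key (minV lt x y) = minK (key x) (key y).
Proof.
  unfold minV, minK. destruct x as [b|b|], y as [c|c|]; simpl; dlt; simpl; auto; ordo; try congruence; rw; dlt; ordo; rw; try congruence.
Qed.
Lemma minK_mono k k' l l' : sqleK k k' -> sqleK l l' -> sqleK (minK k l) (minK k' l').
Proof.
  unfold minK. destruct k, k', l, l'; simpl; intros H1 H2; try tauto; subst;
  dlt; simpl; auto.
Qed.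
Lemma min_mono x x' y y' : sqle lt a x x' -> sqle lt a y y' ->
  sqle lt a (minV lt x y) (minV lt x' y').
Proof. rewrite !key_sqle, !key_min. apply minK_mono. Qed.
Lemma leV_FT : leV lt (VF a) (VT a).
Proof. simpl; auto. Qed.
Lemma key_Lo_below v b : leV lt v (VF b) -> lt b a = true -> exists c, key v = KLo c.
Proof. destruct v as [c|c|]; simpl; try tauto; intros H1 H2. exists c.
  destruct (nlt _ _ H1) as [->|H]; [rewrite H2; auto|]. rewrite (trans _ _ _ H H2); auto. Qed.
Lemma above_T v b : ~ leV lt v (VT b) -> exists c, v = VT c /\ lt c b = true.
Proof. destruct v as [c|c|]; simpl; try tauto. intros H; exists c; split; auto.
  destruct (lt c b); auto; tauto. Qed.
Lemma key_Hi_of c : lt c a = true -> key (VT c) = KHi c.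
Proof. intros H; simpl; rewrite H; auto. Qed.
Lemma band_notF x : band (key x) -> ~ leV lt x (VF a) -> key x = KM \/ key x = KT.
Proof. intros [H|[H|H]] Hn; auto. exfalso; apply Hn. apply key_F in H; subst; apply leV_refl. Qed.
Lemma MT_notF x : key x = KM \/ key x = KT -> ~ leV lt x (VF a).
Proof. intros H Hle. assert (Hb : band (key x)) by (unfold band; tauto).
  apply key_band in Hb. destruct Hb as [H1 H2]. pose proof (leV_antisym _ _ Hle H1).
  subst. simpl in H. rewrite irr in H. destruct H; discriminate. Qed.

Lemma sup_mono (S S' : V O -> Prop) :
  (forall v, S v -> exists v', S' v' /\ sqle lt a v v') ->
  (forall v', S' v' -> exists v, S v /\ sqle lt a v v') ->
  sqle lt a (supV lt S) (supV lt S').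
Proof.
  intros H1 H2. set (s := supV lt S). set (t := supV lt S').
  assert (Heq : (forall v, S v -> ~ band (key v)) -> t = s).
  { intros Hnb. unfold t, s. apply sup_ext. intros v; split.
    - intros Hv. destruct (H2 v Hv) as [w [Hw Hwv]].
      rewrite (sqle_fix _ _ Hwv (Hnb w Hw)). auto.
    - intros Hv. destruct (H1 v Hv) as [w [Hw Hwv]].
      rewrite (sqle_fix _ _ Hwv (Hnb v Hv)) in Hw; auto. }
  apply key_sqle.
  destruct (classic (exists v, S v /\ band (key v))) as [Hex|Hnex].
  2:{ rewrite Heq; [apply sqleK_refl | intros v Hv Hb; apply Hnex; eauto]. }
  destruct (classic (band (key s))) as [Hsb|Hsb].
  2:{ destruct (key s) eqn:Es.
  -
    destruct (key_Lo _ _ Es) as [Hs Hb].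
    rewrite Heq. rewrite Es; simpl; auto.
    intros v Hv Hbv. pose proof (sup_ub S v Hv). fold s in H. rewrite Hs in H.
    destruct (key_Lo_below _ _ H Hb) as [c Hc]. rewrite Hc in Hbv.
    destruct Hbv as [?|[?|?]]; discriminate.
  - exfalso; apply Hsb; left; auto.
  - exfalso; apply Hsb; right; left; auto.
  - exfalso; apply Hsb; right; right; auto.
  -
    destruct (key_Hi _ _ Es) as [Hs Hb].
    assert (HS : S (VT b)) by (apply sup_T; auto).
    destruct (H1 _ HS) as [v' [Hv' Hsv]].
    assert (Hv'e : v' = VT b).
    { apply (sqle_fix _ _ Hsv). rewrite (key_Hi_of _ Hb). unfold band; intros [?|[?|?]]; discriminate. }
    subst v'.
    assert (Ht : t = VT b).
    { apply leV_antisym.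
      - apply sup_least. intros w' Hw'. apply NNPP; intro Hn.
        destruct (above_T _ _ Hn) as [c [-> Hc]].
        destruct (H2 _ Hw') as [v [Hv Hvw]].
        assert (Hca : lt c a = true) by (eapply trans; eauto).
        rewrite (sqle_fix' _ _ Hvw) in Hv.
        + apply Hn. rewrite <- Hs. apply sup_ub; auto.
        + rewrite (key_Hi_of _ Hca). unfold band; intros [?|[?|?]]; discriminate.
      - apply sup_ub; auto. }
    rewrite Ht, <- Hs, Es. apply sqleK_refl. }
  pose proof (proj1 (key_band s) Hsb) as [Hs1 Hs2].
  assert (Htb : band (key t)).
  { apply key_band. split.
    - destruct Hex as [v0 [Hv0 Hb0]]. destruct (H1 _ Hv0) as [v' [Hv' Hvv]].
      pose proof (proj1 (sqleK_band _ _ (proj1 (key_sqle _ _) Hvv)) Hb0) as Hb'.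
      apply key_band in Hb'. eapply leV_trans; [apply Hb'|]. apply sup_ub; auto.
    - apply sup_least. intros w' Hw'. destruct (H2 _ Hw') as [v [Hv Hvw]].
      destruct (classic (band (key v))) as [Hbv|Hbv].
      + pose proof (proj1 (sqleK_band _ _ (proj1 (key_sqle _ _) Hvw)) Hbv) as Hb'.
        apply key_band in Hb'. apply Hb'.
      + rewrite (sqle_fix _ _ Hvw Hbv). eapply leV_trans; [|apply Hs2]. apply sup_ub; auto. }
  destruct Hsb as [E|[E|E]]; rewrite E.
  - destruct Htb as [HH|[HH|HH]]; rewrite HH; simpl; auto.
  - assert (Hn : ~ leV lt s (VF a)) by (apply MT_notF; auto).
    destruct (sup_gt _ _ Hn) as [w [Hw Hwn]].
    assert (Hws : leV lt w s) by (apply sup_ub; auto).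
    assert (Hwb : band (key w)).
    { apply key_band; split; [apply nleV; auto | eapply leV_trans; eauto]. }
    destruct (band_notF _ Hwb Hwn) as [HwM|HwT].
    2:{ apply key_T in HwT; subst w. assert (s = VT a) by (apply leV_antisym; auto).
        rewrite H in E; simpl in E; rewrite irr in E; discriminate. }
    destruct (H1 _ Hw) as [v' [Hv' Hwv]].
    pose proof (proj1 (key_sqle _ _) Hwv) as Hk. rewrite HwM in Hk.
    assert (Hv'MT : key v' = KM \/ key v' = KT) by (destruct (key v'); simpl in Hk; tauto).
    pose proof (MT_notF _ Hv'MT) as Hv'n.
    assert (Htn : ~ leV lt t (VF a)).
    { intro Hc. apply Hv'n. eapply leV_trans; [|apply Hc]. apply sup_ub; auto. }
    destruct (band_notF _ Htb Htn) as [HH|HH]; rewrite HH; simpl; auto.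
  - apply key_T in E.
    assert (HS : S (VT a)) by (apply sup_T; exact E).
    destruct (H1 _ HS) as [v' [Hv' Hsv]].
    pose proof (proj1 (key_sqle _ _) Hsv) as Hk. simpl in Hk. rewrite irr in Hk.
    assert (Hv'T : key v' = KT) by (destruct (key v'); simpl in Hk; tauto).
    apply key_T in Hv'T; subst v'.
    assert (Ht : t = VT a).
    { apply leV_antisym; [apply key_band; auto | apply sup_ub; auto]. }
    rewrite Ht; simpl; rewrite irr; simpl; auto.
Qed.
Lemma KM_below s w : key s = KM -> leV lt w s -> ~ leV lt w (VF a) -> key w = KM.
Proof.
  intros E Hws Hwn.
  assert (Hsb : band (key s)) by (right; left; auto).
  apply key_band in Hsb as [Hs1 Hs2].
  assert (Hwb : band (key w)).
  { apply key_band; split; [apply nleV; auto | eapply leV_trans; eauto]. }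
  destruct (band_notF _ Hwb Hwn) as [HwM|HwT]; auto.
  apply key_T in HwT; subst w. assert (s = VT a) by (apply leV_antisym; auto).
  subst s; simpl in E; rewrite irr in E; discriminate.
Qed.

Definition atom {Z : Type} (l : literal Z) : Z := match l with Pos q => q | Neg q => q end.

Lemma lit_mono (Z : Type) (I J : Z -> V O) l :
  sqle lt a (I (atom l)) (J (atom l)) -> sqle lt a (eval_lit succ I l) (eval_lit succ J l).
Proof. destruct l; simpl; auto. apply neg_mono. Qed.

Lemma lits_mono (Z : Type) (I J : Z -> V O) ls :
  (forall l, In l ls -> sqle lt a (eval_lit succ I l) (eval_lit succ J l)) ->
  sqle lt a (eval_body lt o0 succ I (BLits ls)) (eval_body lt o0 succ J (BLits ls)).
Proof.
  induction ls as [|l ls IH]; simpl; intros H.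
  - apply sqle_refl.
  - apply min_mono; auto.
Qed.

Lemma body_mono (Z : Type) (I J : Z -> V O) bd :
  sqleI lt a I J -> sqle lt a (eval_body lt o0 succ I bd) (eval_body lt o0 succ J bd).
Proof.
  intros H. destruct bd; try apply sqle_refl. apply lits_mono. intros l _. apply lit_mono, H.
Qed.

Lemma TP_mono (Z : Type) (P : program Z) : alpha_monotonic lt a (TP lt o0 succ P).
Proof.
  intros I J H p. unfold TP. apply sup_mono.
  - intros v [r [Hr [Hh <-]]]. exists (eval_body lt o0 succ J (rbody r)). split; eauto.
    apply body_mono; auto.
  - intros v [r [Hr [Hh <-]]]. exists (eval_body lt o0 succ I (rbody r)). split; eauto.
    apply body_mono; auto.
Qed.
Lemma chain_le (c : nat -> V O) : (forall n, sqle lt a (c n) (c (S n))) ->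
  forall n m, n <= m -> sqle lt a (c n) (c m).
Proof.
  intros H n m Hnm. induction Hnm; [apply sqle_refl|]. eapply sqle_trans; eauto.
Qed.

Lemma chain_stab (c : nat -> V O) : (forall n, sqle lt a (c n) (c (S n))) ->
  exists N, forall n, N <= n -> key (c n) = key (c N).
Proof.
  intros H. pose proof (chain_le c H) as HL.
  assert (Hk : forall n m, n <= m -> sqleK (key (c n)) (key (c m))) by (intros; apply key_sqle; auto).
  destruct (classic (band (key (c 0)))) as [Hb|Hb].
  2:{ exists 0. intros n _. rewrite (sqle_fix _ _ (HL 0 n (PeanoNat.Nat.le_0_l n)) Hb). auto. }
  destruct (classic (exists n, key (c n) = KT)) as [[N HN]|HT].
  { exists N. intros n Hn. pose proof (Hk _ _ Hn) as Hk'. rewrite HN in *.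
    destruct (key (c n)); simpl in Hk'; tauto. }
  destruct (classic (exists n, key (c n) = KM)) as [[N HN]|HM].
  { exists N. intros n Hn. pose proof (Hk _ _ Hn) as Hk'. rewrite HN in *.
    destruct (key (c n)) eqn:E; simpl in Hk'; try tauto. exfalso; apply HT; eauto. }
  exists 0. intros n _.
  assert (forall m, key (c m) = KF).
  { intros m. pose proof (proj1 (sqleK_band _ _ (Hk 0 m (PeanoNat.Nat.le_0_l m))) Hb) as [?|[?|?]]; auto.
    - exfalso; apply HM; eauto.
    - exfalso; apply HT; eauto. }
  rewrite !H0; auto.
Qed.

Lemma lubA_key (c : nat -> V O) w : (forall n, sqle lt a (c n) w) ->
  (exists n, key (c n) = key w) ->
  key (lubA lt succ a (c 0) (fun v => exists n, c n = v)) = key w.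
Proof.
  intros H [n0 Hn0]. unfold lubA.
  destruct (classic (band (key w))) as [Hb|Hb].
  2:{ rewrite (sqle_fix' _ _ (H 0) Hb).
      destruct (excluded_middle_informative (ord_lt lt w a)) as [_|Hn]; auto.
      exfalso. apply Hn. destruct w as [b|b|]; simpl in *; dlt; auto;
      exfalso; apply Hb; unfold band; auto. }
  assert (Hcb : forall n, band (key (c n))).
  { intros n. apply (sqleK_band _ _ (proj1 (key_sqle _ _) (H n))); auto. }
  destruct (excluded_middle_informative (ord_lt lt (c 0) a)) as [Hl|_].
  { exfalso. pose proof (Hcb 0) as Hb0. destruct (c 0) as [b|b|]; simpl in *; try tauto;
    rewrite Hl in Hb0; unfold band in Hb0; destruct Hb0 as [?|[?|?]]; discriminate. }
  destruct Hb as [E|[E|E]].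
  -
    assert (Hall : forall n, c n = VF a).
    { intros n. apply key_F. pose proof (proj1 (key_sqle _ _) (H n)) as Hk. rewrite E in Hk.
      destruct (key (c n)); simpl in Hk; tauto. }
    destruct (excluded_middle_informative (exists n, c n = VT a)) as [[n Hn]|_].
    { rewrite Hall in Hn; discriminate. }
    destruct (excluded_middle_informative (forall y, (exists n, c n = y) -> y = VF a)) as [_|Hn].
    + simpl; rewrite irr; auto.
    + exfalso; apply Hn. intros y [n <-]; auto.
  -
    assert (HnT : forall n, key (c n) <> KT).
    { intros n Hn. pose proof (proj1 (key_sqle _ _) (H n)) as Hk. rewrite E, Hn in Hk. simpl in Hk; auto. }
    destruct (excluded_middle_informative (exists n, c n = VT a)) as [[n Hn]|_].
    { exfalso; apply (HnT n). apply key_T; auto. }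
    destruct (excluded_middle_informative (forall y, (exists n, c n = y) -> y = VF a)) as [Hy|_].
    + exfalso. rewrite E in Hn0. assert (c n0 = VF a) by eauto.
      rewrite H0 in Hn0; simpl in Hn0; rewrite irr in Hn0; discriminate.
    + rewrite E. simpl. rewrite (succ_gt a). pose proof (succ_gt a).
      destruct (lt (succ a) a) eqn:E2; auto. ordo.
  -
    rewrite E in Hn0. apply key_T in Hn0.
    destruct (excluded_middle_informative (exists n, c n = VT a)) as [_|Hn].
    + rewrite E; simpl; rewrite irr; auto.
    + exfalso; apply Hn; eauto.
Qed.
Lemma lit_cong (Z : Type) (I J : Z -> V O) l :
  key (I (atom l)) = key (J (atom l)) -> key (eval_lit succ I l) = key (eval_lit succ J l).
Proof.
  intros H. apply sqeq_key in H as [H1 H2]. apply sqeq_key; split; apply lit_mono; auto.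
Qed.

Lemma body_stab (Z : Type) (I : nat -> Z -> V O) (J : Z -> V O) :
  (forall z, exists N, forall n, N <= n -> key (I n z) = key (J z)) ->
  forall bd, exists N, key (eval_body lt o0 succ (I N) bd) = key (eval_body lt o0 succ J bd).
Proof.
  intros Hst bd. destruct bd as [ls| |]; try (exists 0; reflexivity).
  assert (HL : exists N, forall n, N <= n -> forall l, In l ls ->
            key (eval_lit succ (I n) l) = key (eval_lit succ J l)).
  { induction ls as [|l ls IH].
    - exists 0. intros n _ l [].
    - destruct IH as [N2 HN2]. destruct (Hst (atom l)) as [N1 HN1].
      exists (Nat.max N1 N2). intros n Hn l' [<-|Hl'].
      + apply lit_cong. apply HN1. lia.
      + apply HN2; auto. lia. }
  destruct HL as [N HN]. exists N. apply sqeq_key; split; apply lits_mono; intros l Hl;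
  apply key_sqle; rewrite (HN N (le_n N) l Hl); apply sqleK_refl.
Qed.
End S.

Theorem mainTheorem19 :
  forall (O : Type) (lt : O -> O -> bool) (o0 : O) (succ : O -> O),
  is_Omega lt o0 succ ->
  forall (Z : Type) (P : program Z),
  countable_type {r : rule Z | P r} ->
  forall a : O, alpha_continuous lt succ a (TP lt o0 succ P).
Proof.
  intros O lt o0 succ Hom Z P _ a. split; [apply (TP_mono _ _ _ _ Hom)|].
  intros I Hc.
  set (J := lubA_seq lt succ a I).
  assert (HJ : forall z, (forall n, sqle lt a (I n z) (J z)) /\
                 exists N, forall n, N <= n -> key _ lt a (I n z) = key _ lt a (J z)).
  { intros z.
    destruct (chain_stab _ _ _ _ Hom a (fun n => I n z) (fun n => Hc n z)) as [N HN].
    assert (HL : forall n, sqle lt a (I n z) (I N z)).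
    { intros n. destruct (PeanoNat.Nat.le_ge_cases n N) as [Hle|Hge].
      - apply (chain_le _ _ _ _ Hom a (fun n => I n z) (fun n => Hc n z)); auto.
      - apply (key_sqle _ _ _ _ Hom). simpl in HN. rewrite (HN n Hge). apply sqleK_refl. }
    assert (HK : key _ lt a (J z) = key _ lt a (I N z)).
    { unfold J, lubA_seq. apply (lubA_key _ _ _ _ Hom a (fun n => I n z)); eauto. }
    split.
    - intros n. apply (key_sqle _ _ _ _ Hom). rewrite HK. apply (key_sqle _ _ _ _ Hom); auto.
    - exists N. intros n Hn. rewrite HK. apply (HN n Hn). }
  intros p. apply (sqeq_key _ _ _ _ Hom). unfold lubA_seq. symmetry.
  assert (Hcn : forall n, sqle lt a (TP lt o0 succ P (I n) p) (TP lt o0 succ P J p)).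
  { intros n. apply (TP_mono _ _ _ _ Hom). intros z; apply HJ. }
  apply (lubA_key _ _ _ _ Hom a (fun n => TP lt o0 succ P (I n) p)); auto.
  assert (Hst : forall z, exists N, forall n, N <= n -> key _ lt a (I n z) = key _ lt a (J z))
    by (intros z; apply HJ).
  set (t := TP lt o0 succ P J p). fold t in Hcn.
  destruct (classic (band _ (key _ lt a t))) as [Hb|Hb].
  2:{ exists 0. rewrite (sqle_fix' _ _ _ _ Hom a _ _ (Hcn 0) Hb). auto. }
  destruct Hb as [E|[E|E]].
  - exists 0. pose proof (proj1 (key_sqle _ _ _ _ Hom _ _ _) (Hcn 0)) as Hk. fold t. rewrite E in *.
    destruct (key _ lt a (TP lt o0 succ P (I 0) p)); simpl in Hk; tauto.
  -
    assert (Hn : ~ leV lt t (VF a)) by (apply (MT_notF _ _ _ _ Hom); auto).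
    destruct (sup_gt _ _ _ _ Hom _ _ Hn) as [w [[r [Hr [Hh Hw]]] Hwn]].
    assert (Hwt : leV lt w t) by (apply (sup_ub _ _ _ _ Hom); exists r; auto).
    pose proof (KM_below _ _ _ _ Hom _ _ _ E Hwt Hwn) as HwM.
    destruct (body_stab _ _ _ _ Hom a _ I J Hst (rbody r)) as [N HN].
    exists N. rewrite Hw, HwM in HN.
    pose proof (MT_notF _ _ _ _ Hom a _ (or_introl HN)) as HbN.
    assert (HcN : ~ leV lt (TP lt o0 succ P (I N) p) (VF a)).
    { intro Hc'. apply HbN. eapply (leV_trans _ _ _ _ Hom); [|apply Hc'].
      apply (sup_ub _ _ _ _ Hom). exists r; auto. }
    pose proof (proj1 (key_sqle _ _ _ _ Hom _ _ _) (Hcn N)) as Hk.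
    assert (HbcN : band _ (key _ lt a (TP lt o0 succ P (I N) p))).
    { apply (sqleK_band _ _ _ Hk). rewrite E; right; left; auto. }
    rewrite E in *. destruct (band_notF _ _ _ _ Hom _ _ HbcN HcN) as [HH|HH]; rewrite HH in *; auto.
    simpl in Hk; tauto.
  -
    apply (key_T _ _ _ _ Hom) in E.
    pose proof (sup_T _ _ _ _ Hom _ _ E) as [r [Hr [Hh Hw]]].
    destruct (body_stab _ _ _ _ Hom a _ I J Hst (rbody r)) as [N HN].
    exists N. rewrite Hw in HN. simpl in HN. rewrite (irr _ _ _ _ Hom) in HN.
    apply (key_T _ _ _ _ Hom) in HN.
    assert (H1 : leV lt (VT a) (TP lt o0 succ P (I N) p)).
    { rewrite <- HN. apply (sup_ub _ _ _ _ Hom). exists r; auto. }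
    pose proof (proj1 (key_sqle _ _ _ _ Hom _ _ _) (Hcn N)) as Hk.
    assert (HbcN : band _ (key _ lt a (TP lt o0 succ P (I N) p))).
    { apply (sqleK_band _ _ _ Hk). rewrite E; simpl; rewrite (irr _ _ _ _ Hom); right; right; auto. }
    apply key_band in HbcN. destruct HbcN as [_ H2].
    rewrite E, (leV_antisym _ _ _ _ Hom _ _ H2 H1). auto.
Qed.
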